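(* Let $q\ge1$ and assume Hypothesis (H$_q$). Then for all $x\in[a,b]$ and $\lambda\in[0,1]$, $$\Big|(1-\lambda)f(mx)+\lambda\frac{(x-a)f(ma)+(b-x)f(mb)}{b-a}-\frac{1}{m(b-a)}\int_{ma}^{mb}f(t)\,dt\Big|\le\frac{mA_1(1,\lambda)^{1-\frac1q}}{b-a}\Big\{(x-a)^2\Big(|f'(mx)|^qA_2(\alpha,1,\lambda)+m|f'(a)|^qA_3(\alpha,1,\lambda)\Big)^{\frac1q}+(b-x)^2\Big(|f'(mx)|^qA_2(\alpha,1,\lambda)+m|f'(b)|^qA_3(\alpha,1,\lambda)\Big)^{\frac1q}\Big\}.$$
   Context: $(\alpha,m)$-convexity: for $(\alpha,m)\in[0,1]\times(0,1]$ and an interval $K\subseteq[0,\infty)$, a function $g:K\to\mathbb{R}$ is $(\alpha,m)$-convex on $K$ if $g(tX+m(1-t)Y)\le t^\alpha g(X)+m(1-t^\alpha)g(Y)$ for all $X,Y\in K$ and $t\in[0,1]$ with $tX+m(1-t)Y\in K$ (convention $0^0=1$). Hypothesis (H$_q$): $I\subseteq[0,\infty)$ is an interval, $f:I\to\mathbb{R}$ is differentiable on the interior $I^\circ$, $m\in(0,1]$, $\alpha\in[0,1]$, $a<b$ with $ma,b\in I^\circ$, $f'$ is Lebesgue integrable on $[ma,mb]$, and $|f'|^q$ is $(\alpha,m)$-convex on $[ma,b]$. Constants: $A_1(\theta,\lambda)=\frac{2\theta\lambda^{1+\frac1\theta}+1}{\theta+1}-\lambda$, $A_2(\alpha,\theta,\lambda)=\frac{2\theta\lambda^{1+\frac{1+\alpha}{\theta}}}{(\alpha+1)(\alpha+\theta+1)}+\frac{1}{\alpha+\theta+1}-\frac{\lambda}{\alpha+1}$,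 $A_3(\alpha,\theta,\lambda)=A_1(\theta,\lambda)-A_2(\alpha,\theta,\lambda)$. *)

(* Defs.v *)
From Stdlib Require Import Reals Lra.
Open Scope R_scope.

Definition rpow (x y : R) : R :=
  if Req_EM_T x 0 then (if Req_EM_T y 0 then 1 else 0) else Rpower x y.

Definition is_interval (I : R -> Prop) : Prop :=
  forall x y z, I x -> I z -> x <= y <= z -> I y.

(* Interior points: we use the Stdlib notion Rtopology.interior (open-neighbourhood interior). *)

Definition alpha_m_convex (alpha m : R) (K : R -> Prop) (g : R -> R) : Prop :=
  forall X Y t, K X -> K Y -> 0 <= t <= 1 ->
    K (t * X + m * (1 - t) * Y) ->
    g (t * X + m * (1 - t) * Y) <= rpow t alpha * g X + m * (1 - rpow t alpha) * g Y.

Definition A_1 (theta lambda : R) : R :=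
  (2 * theta * rpow lambda (1 + 1 / theta) + 1) / (theta + 1) - lambda.

Definition A_2 (alpha theta lambda : R) : R :=
  2 * theta * rpow lambda (1 + (1 + alpha) / theta) / ((alpha + 1) * (alpha + theta + 1))
  + 1 / (alpha + theta + 1) - lambda / (alpha + 1).

Definition A_3 (alpha theta lambda : R) : R :=
  A_1 theta lambda - A_2 alpha theta lambda.

(* Main.v *)
Require Import Defs.
From Coquelicot Require Import Coquelicot.
From Stdlib Require Import Reals Lra.
Open Scope R_scope.


Definition pw (b t : R) : R := if Rlt_dec 0 t then Rpower t b else 0.

Lemma Rpower_1_base (y : R) : Rpower 1 y = 1.
Proof. unfold Rpower. rewrite ln_1, Rmult_0_r. apply exp_0. Qed.

Lemma pw_pos b t : 0 < t -> pw b t = Rpower t b.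
Proof. intros H. unfold pw. destruct (Rlt_dec 0 t); lra. Qed.

Lemma pw_deriv b t : 0 < t -> is_derive (pw b) t (b * Rpower t (b - 1)).
Proof.
  intros Ht.
  apply is_derive_ext_loc with (f := fun x => Rpower x b).
  - assert (Hp : 0 < t / 2) by lra.
    exists (mkposreal _ Hp). intros y Hy. simpl in Hy.
    unfold ball in Hy; simpl in Hy; unfold AbsRing_ball, abs, minus, plus, opp in Hy; simpl in Hy.
    apply Rabs_def2 in Hy. rewrite pw_pos; lra.
  - apply is_derive_Reals. apply derivable_pt_lim_power. exact Ht.
Qed.

Lemma pw_cont b t : 0 < b -> continuity_pt (pw b) t.
Proof.
  intros Hb.
  destruct (Rlt_dec 0 t) as [Ht|Ht].
  - apply derivable_continuous_pt. exists (b * Rpower t (b-1)).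
    apply is_derive_Reals. apply pw_deriv; auto.
  - destruct (Req_dec t 0) as [H0|H0].
    + subst t. intros eps Heps. exists (Rpower eps (1/b)). split.
      { apply exp_pos. }
      intros y [_ Hy]. unfold dist in *; simpl in *; unfold R_dist in *.
      unfold pw at 2. destruct (Rlt_dec 0 0); [lra|]. rewrite Rminus_0_r in *.
      unfold pw. destruct (Rlt_dec 0 y) as [Hy0|Hy0].
      * try rewrite Rminus_0_r. rewrite Rabs_pos_eq by (left; apply exp_pos).
        rewrite Rabs_pos_eq in Hy by lra.
        apply Rlt_le_trans with (Rpower (Rpower eps (1/b)) b).
        { apply Rlt_Rpower_l; auto. }
        rewrite Rpower_mult. replace (1/b*b) with 1 by (field; lra).
        rewrite Rpower_1; lra.
      * try rewrite Rminus_0_r. rewrite Rabs_R0; auto.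
    +
      intros eps Heps. exists (-t). split; [lra|].
      intros y [_ Hy]. unfold dist in *; simpl in *; unfold R_dist in *.
      apply Rabs_def2 in Hy.
      unfold pw. destruct (Rlt_dec 0 y); [lra|]. destruct (Rlt_dec 0 t); [lra|].
      rewrite Rminus_0_r, Rabs_R0; auto.
Qed.

Lemma Mono (g dg : R -> R) (c d : R) : c <= d ->
  (forall t, c < t < d -> is_derive g t (dg t)) ->
  (forall t, c <= t <= d -> continuity_pt g t) ->
  (forall t, c < t < d -> 0 <= dg t) -> g c <= g d.
Proof.
  intros Hcd Hd Hc Hp.
  destruct (Req_dec c d) as [E|Hne]. { subst; lra. }
  set (pr1 := fun t (P : c < t < d) =>
     exist (fun l => derivable_pt_abs g t l) (dg t) (proj1 (is_derive_Reals g t (dg t)) (Hd t P))).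
  destruct (MVT g id c d pr1 (fun t _ => derivable_pt_id t)) as [z [Pz Heq]].
  - lra.
  - exact Hc.
  - intros; apply derivable_continuous_pt, derivable_pt_id.
  - unfold pr1 in Heq. simpl in Heq. rewrite derive_pt_id in Heq. unfold id in Heq.
    assert (0 <= dg z) by (apply Hp; auto).
    assert (0 <= (d - c) * dg z) by (apply Rmult_le_pos; lra). nra.
Qed.


Lemma Mono2 (u v du dv : R -> R) (c d : R) : c <= d ->
  (forall t, c < t < d -> is_derive u t (du t)) ->
  (forall t, c < t < d -> is_derive v t (dv t)) ->
  (forall t, c <= t <= d -> continuity_pt u t) ->
  (forall t, c <= t <= d -> continuity_pt v t) ->
  (forall t, c < t < d -> Rabs (dv t) <= du t) ->
  Rabs (v d - v c) <= u d - u c.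
Proof.
  intros Hcd Hu Hv Cu Cv Hb.
  assert (A1 : (fun t => u t - v t) c <= (fun t => u t - v t) d).
  { apply (Mono (fun t => u t - v t) (fun t => du t - dv t)); auto.
    - intros t Ht. apply (is_derive_minus u v); auto.
    - intros t Ht. apply continuity_pt_minus; auto.
    - intros t Ht. specialize (Hb t Ht). apply Rabs_le_between in Hb. lra. }
  assert (A2 : (fun t => u t + v t) c <= (fun t => u t + v t) d).
  { apply (Mono (fun t => u t + v t) (fun t => du t + dv t)); auto.
    - intros t Ht. apply (is_derive_plus u v); auto.
    - intros t Ht. apply continuity_pt_plus; auto.
    - intros t Ht. specialize (Hb t Ht). apply Rabs_le_between in Hb. lra. }
  simpl in *. apply Rabs_le. lra.
Qed.
Lemma cpt_plus f g x : continuity_pt f x -> continuity_pt g x -> continuity_pt (fun t => f t + g t) x.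
Proof. apply continuity_pt_plus. Qed.
Lemma cpt_minus f g x : continuity_pt f x -> continuity_pt g x -> continuity_pt (fun t => f t - g t) x.
Proof. apply continuity_pt_minus. Qed.
Lemma cpt_mult f g x : continuity_pt f x -> continuity_pt g x -> continuity_pt (fun t => f t * g t) x.
Proof. apply continuity_pt_mult. Qed.
Lemma cpt_scal c g x : continuity_pt g x -> continuity_pt (fun t => c * g t) x.
Proof. intros; apply (cpt_mult (fun _ => c)); auto. apply continuity_pt_const. intros ??; auto. Qed.
Lemma cpt_scalr c g x : continuity_pt g x -> continuity_pt (fun t => g t / c) x.
Proof. intros; apply (cpt_mult g (fun _ => / c)); auto. apply continuity_pt_const. intros ??; auto. Qed.

Definition Fk (P Rc al la t : R) : R :=
  P*(t*t/2 - la*t) + Rc*(pw (al+2) t/(al+2) - la*(pw (al+1) t/(al+1))).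

Lemma Fk_cont P Rc al la t : 0 <= al -> continuity_pt (Fk P Rc al la) t.
Proof.
intros.
assert (C2 : continuity_pt (pw (al+2)) t) by (apply pw_cont; lra).
assert (C1 : continuity_pt (pw (al+1)) t) by (apply pw_cont; lra).
apply (cpt_plus (fun t => P*(t*t/2 - la*t)) (fun t => Rc*(pw (al+2) t/(al+2) - la*(pw (al+1) t/(al+1))))).
- apply derivable_continuous_pt. exists (P*(t-la)). apply is_derive_Reals. auto_derive; auto. field.
- apply (cpt_scal Rc (fun t => pw (al+2) t/(al+2) - la*(pw (al+1) t/(al+1)))).
  apply (cpt_minus (fun t => pw (al+2) t/(al+2))).
  + apply (cpt_scalr _ (pw (al+2))); auto.
  + apply (cpt_scal la (fun t => pw (al+1) t/(al+1))). apply (cpt_scalr _ (pw (al+1))); auto.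
Qed.

Lemma Rpower_succ t b : 0 < t -> Rpower t (b + 1) = t * Rpower t b.
Proof. intros. rewrite Rpower_plus, Rpower_1 by auto. ring. Qed.

Lemma Fk_deriv P Rc al la t : 0 <= al -> 0 < t ->
  is_derive (Fk P Rc al la) t ((t - la) * (P + Rc * Rpower t al)).
Proof.
  intros Hal Ht. unfold Fk.
  pose proof (pw_deriv (al+2) t Ht) as D2.
  pose proof (pw_deriv (al+1) t Ht) as D1.
  auto_derive.
  - split; [exists (((al + 2) * Rpower t (al + 2 - 1))) | split; [exists ((al + 1) * Rpower t (al + 1 - 1))|]]; auto.
  - replace (Derive (fun x => pw (al+2) x) t) with ((al + 2) * Rpower t (al + 2 - 1)) by (symmetry; apply is_derive_unique; auto).
    replace (Derive (fun x => pw (al+1) x) t) with ((al + 1) * Rpower t (al + 1 - 1)) by (symmetry; apply is_derive_unique; auto).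
    replace (al+2-1) with (al+1) by ring. replace (al+1-1) with al by ring.
    rewrite Rpower_succ by auto. field. lra.
Qed.

Lemma Fk_0 P Rc al la : Fk P Rc al la 0 = 0.
Proof. unfold Fk, pw. destruct (Rlt_dec 0 0); [lra|]. unfold Rdiv; ring. Qed.

Lemma rpow_pos x y : 0 < x -> rpow x y = Rpower x y.
Proof. intros. unfold rpow. destruct (Req_EM_T x 0); [lra|auto]. Qed.

Lemma Fk_alg P Rc al la : 0 <= al -> 0 <= la <= 1 ->
  Fk P Rc al la 1 - 2 * Fk P Rc al la la = P * A_1 1 la + Rc * A_2 al 1 la.
Proof.
  intros Hal Hla. unfold Fk, A_1, A_2.
  rewrite !(pw_pos _ 1) by lra. rewrite !Rpower_1_base.
  replace (1 + 1/1) with (INR 2) by (simpl; field).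
  replace (1 + (1+al)/1) with (al + 1 + 1) by field.
  destruct (Req_dec la 0) as [E|NE].
  - subst la. unfold pw, rpow. destruct (Rlt_dec 0 0); [lra|].
    destruct (Req_EM_T 0 0); [|lra]. destruct (Req_EM_T (INR 2) 0) as [ee|]; [simpl in ee; lra|].
    destruct (Req_EM_T (al+1+1) 0); [lra|]. field. lra.
  - rewrite !rpow_pos by lra. rewrite !pw_pos by lra. rewrite Rpower_pow by lra.
    replace (al+2) with (al+1+1) by ring. rewrite (Rpower_succ la (al+1)) by lra.
    field. lra.
Qed.

Lemma K (h dh : R -> R) P Rc al la : 0 <= al -> 0 <= la <= 1 ->
  (forall t, 0 <= t <= 1 -> continuity_pt h t) ->
  (forall t, 0 < t < 1 -> is_derive h t (dh t)) ->
  (forall t, 0 < t < 1 -> Rabs (dh t) <= Rabs (t - la) * (P + Rc * Rpower t al)) ->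
  Rabs (h 1 - h 0) <= P * A_1 1 la + Rc * A_2 al 1 la.
Proof.
  intros Hal Hla Hc Hd Hb.
  set (F := Fk P Rc al la).
  assert (S1 : Rabs (h la - h 0) <= (fun t => - F t) la - (fun t => - F t) 0).
  { apply (Mono2 (fun t => - F t) h (fun t => - ((t - la) * (P + Rc * Rpower t al))) dh); try lra.
    - intros t Ht. apply is_derive_Reals. apply (derivable_pt_lim_opp F).
      apply is_derive_Reals. apply Fk_deriv; lra.
    - intros t Ht; apply Hd; lra.
    - intros t Ht. apply (continuity_pt_opp F). apply Fk_cont; lra.
    - intros t Ht; apply Hc; lra.
    - intros t Ht. assert (Ht1: 0<t<1) by lra; specialize (Hb t Ht1). rewrite (Rabs_left1 (t-la)) in Hb by lra. eapply Rle_trans; [exact Hb| right; ring]. }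
  assert (S2 : Rabs (h 1 - h la) <= F 1 - F la).
  { apply (Mono2 F h (fun t => ((t - la) * (P + Rc * Rpower t al))) dh); try lra.
    - intros t Ht. apply Fk_deriv; lra.
    - intros t Ht; apply Hd; lra.
    - intros t Ht. apply Fk_cont; lra.
    - intros t Ht; apply Hc; lra.
    - intros t Ht. assert (Ht1: 0<t<1) by lra; specialize (Hb t Ht1). rewrite (Rabs_pos_eq (t-la)) in Hb by lra. exact Hb. }
  simpl in S1. unfold F in *. rewrite Fk_0 in S1.
  rewrite <- Fk_alg by lra.
  replace (h 1 - h 0) with ((h la - h 0) + (h 1 - h la)) by ring.
  eapply Rle_trans; [apply Rabs_triang|]. lra.
Qed.


Lemma exp_lin a m : exp m * (1 + (a - m)) <= exp a.
Proof.
  replace a with (m + (a - m)) at 2 by ring. rewrite exp_plus.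
  apply Rmult_le_compat_l; [left; apply exp_pos| apply exp_ineq1_le].
Qed.

Lemma bern y p : 0 < y -> 0 <= p <= 1 -> Rpower y p <= p * y + (1 - p).
Proof.
  intros Hy Hp. unfold Rpower.
  set (m := p * ln y).
  pose proof (exp_lin (ln y) m) as H1. pose proof (exp_lin 0 m) as H2.
  rewrite exp_ln in H1 by auto. rewrite exp_0 in H2.
  assert (p * (exp m * (1 + (ln y - m))) + (1 - p) * (exp m * (1 + (0 - m))) = exp m).
  { unfold m. ring. }
  assert (p * (exp m * (1 + (ln y - m))) <= p * y) by (apply Rmult_le_compat_l; lra).
  assert ((1-p) * (exp m * (1 + (0 - m))) <= (1-p) * 1) by (apply Rmult_le_compat_l; lra).
  lra.
Qed.

Lemma rpow_nonneg x y : 0 <= rpow x y.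
Proof. unfold rpow. destruct (Req_EM_T x 0); [destruct (Req_EM_T y 0); lra|left; apply exp_pos]. Qed.

Lemma rpow_pos' x y : 0 < x -> rpow x y = Rpower x y.
Proof. intros. unfold rpow. destruct (Req_EM_T x 0); [lra|auto]. Qed.

Lemma rpow_0 y : y <> 0 -> rpow 0 y = 0.
Proof. intros. unfold rpow. destruct (Req_EM_T 0 0); [|lra]. destruct (Req_EM_T y 0); lra. Qed.

Lemma rpow_rpow y q : 0 <= y -> 0 < q -> rpow (rpow y q) (1/q) = y.
Proof.
  intros Hy Hq. destruct (Req_dec y 0) as [E|E].
  - subst. rewrite rpow_0 by lra. apply rpow_0. apply Rgt_not_eq. unfold Rdiv; rewrite Rmult_1_l. apply Rinv_0_lt_compat; auto.
  - rewrite (rpow_pos' y) by lra. rewrite rpow_pos' by apply exp_pos.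
    rewrite Rpower_mult. replace (q * (1/q)) with 1 by (field; lra). apply Rpower_1; lra.
Qed.

Lemma rpow_mono u w e : 0 <= u <= w -> 0 < e -> rpow u e <= rpow w e.
Proof.
  intros Hu He. destruct (Req_dec u 0) as [E|E].
  - subst. rewrite rpow_0 by lra. apply rpow_nonneg.
  - rewrite !rpow_pos' by lra. apply Rle_Rpower_l; lra.
Qed.

Lemma Rpower_m1 s p : 0 < s -> Rpower s (p - 1) = Rpower s p / s.
Proof.
  intros Hs. unfold Rminus. rewrite Rpower_plus, Rpower_Ropp, Rpower_1 by auto. reflexivity.
Qed.

Lemma tangent v s q : 0 <= v -> 0 < s -> 1 <= q ->
  rpow v (1/q) <= Rpower s (1/q) * (1 - 1/q) + (1/q) * Rpower s (1/q - 1) * v.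
Proof.
  intros Hv Hs Hq.
  assert (Hp : 0 < 1/q <= 1).
  { split. unfold Rdiv; rewrite Rmult_1_l; apply Rinv_0_lt_compat; lra.
    apply (Rmult_le_reg_r q); [lra|]. unfold Rdiv; rewrite Rmult_assoc, Rinv_l, Rmult_1_l by lra. lra. }
  set (p := 1/q) in *.
  pose proof (exp_pos (p * ln s)) as Hsp. fold (Rpower s p) in Hsp.
  destruct (Req_dec v 0) as [E|E].
  - subst v. rewrite rpow_0 by lra. assert (0 <= Rpower s p * (1-p)) by (apply Rmult_le_pos; lra). lra.
  - rewrite rpow_pos' by lra. rewrite Rpower_m1 by auto.
    pose proof (bern (v/s) p ltac:(apply Rdiv_lt_0_compat; lra) ltac:(lra)) as B.
    replace (Rpower v p) with (Rpower s p * Rpower (v/s) p).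
    + replace (Rpower s p * (1 - p) + p * (Rpower s p / s) * v) with (Rpower s p * (p * (v/s) + (1-p))) by (field; lra).
      apply Rmult_le_compat_l; lra.
    + rewrite Rpower_mult_distr by (try apply Rdiv_lt_0_compat; lra). f_equal. field. lra.
Qed.

Lemma Rpower_exp x y : Rpower (exp x) y = exp (y * x).
Proof. unfold Rpower. rewrite ln_exp. auto. Qed.

Lemma opt X c A S q : 0 <= c -> 0 < A -> 0 <= S -> 1 <= q ->
  (forall s, 0 < s -> X <= c * (Rpower s (1/q) * (1 - 1/q) * A + (1/q) * Rpower s (1/q - 1) * S)) ->
  X <= c * (rpow A (1 - 1/q) * rpow S (1/q)).
Proof.
  intros Hc HA HS Hq H.
  assert (Hp : 0 < 1/q <= 1).
  { split. unfold Rdiv; rewrite Rmult_1_l; apply Rinv_0_lt_compat; lra.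
    apply (Rmult_le_reg_r q); [lra|]. unfold Rdiv; rewrite Rmult_assoc, Rinv_l, Rmult_1_l by lra. lra. }
  set (p := 1/q) in *.
  destruct (Req_dec S 0) as [E|E].
  - subst S. rewrite (rpow_0 p) by lra. rewrite Rmult_0_r, Rmult_0_r.
    destruct (Rle_dec X 0) as [|NX]; auto. exfalso.
    set (K := c * (1 - p) * A).
    assert (HK : 0 <= K) by (unfold K; apply Rmult_le_pos; [apply Rmult_le_pos|]; lra).
    destruct (Req_dec K 0) as [K0|K0].
    + specialize (H 1 ltac:(lra)).
      replace (c * (Rpower 1 p * (1 - p) * A + p * Rpower 1 (p - 1) * 0)) with (K * Rpower 1 p) in H by (unfold K; ring).
      rewrite K0 in H. lra.
    + assert (Hx : 0 < X / (2*K)) by (apply Rdiv_lt_0_compat; lra).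
      specialize (H (Rpower (X/(2*K)) (1/p)) ltac:(apply exp_pos)).
      replace (c * (Rpower (Rpower (X / (2 * K)) (1 / p)) p * (1 - p) * A + p * Rpower (Rpower (X / (2 * K)) (1 / p)) (p - 1) * 0))
        with (K * Rpower (Rpower (X / (2 * K)) (1 / p)) p) in H by (unfold K; ring).
      rewrite Rpower_mult in H. replace (1/p*p) with 1 in H by (field; lra).
      rewrite Rpower_1 in H by auto.
      replace (K * (X / (2*K))) with (X/2) in H by (field; lra). lra.
  - assert (HS' : 0 < S) by lra.
    specialize (H (S/A) ltac:(apply Rdiv_lt_0_compat; lra)).
    rewrite !rpow_pos' by lra.
    replace (c * (Rpower A (1 - p) * Rpower S p)) with
       (c * (Rpower (S / A) p * (1 - p) * A + p * Rpower (S / A) (p - 1) * S)); auto.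
    f_equal.
    rewrite <- (exp_ln A) by auto. rewrite <- (exp_ln S) by auto.
    set (a := ln A). set (b := ln S).
    replace (exp b / exp a) with (exp (b - a)).
    2:{ unfold Rminus, Rdiv. rewrite exp_plus, exp_Ropp. auto. }
    rewrite !Rpower_exp.
    replace (exp (p * (b - a)) * (1 - p) * exp a) with ((1-p) * (exp (p * (b-a)) * exp a)) by ring.
    replace (p * exp ((p - 1) * (b - a)) * exp b) with (p * (exp ((p - 1) * (b - a)) * exp b)) by ring.
    rewrite <- !exp_plus.
    replace (p * (b - a) + a) with ((1 - p) * a + p * b) by ring.
    replace ((p - 1) * (b - a) + b) with ((1 - p) * a + p * b) by ring.
    ring.
Qed.


Lemma A1_pos la : 0 <= la <= 1 -> 0 < A_1 1 la.
Proof.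
  intros H. unfold A_1. replace (1 + 1/1) with (INR 2) by (simpl; field).
  destruct (Req_dec la 0) as [E|E].
  - subst. rewrite rpow_0 by (simpl; lra). lra.
  - rewrite rpow_pos' by lra. rewrite Rpower_pow by lra. simpl. nra.
Qed.

Lemma A2_nonneg al la : 0 <= al -> 0 <= la <= 1 -> 0 <= A_2 al 1 la.
Proof.
  intros Hal Hla.
  pose proof (K (fun _ => 0) (fun _ => 0) 0 1 al la Hal Hla) as HK.
  rewrite Rminus_0_r, Rabs_R0 in HK.
  assert (0 <= 0 * A_1 1 la + 1 * A_2 al 1 la); [|lra].
  apply HK.
  - intros; apply continuity_pt_const; intros ??; auto.
  - intros; auto_derive; auto.
  - intros t Ht. try rewrite Rabs_R0. apply Rmult_le_pos; [apply Rabs_pos|].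
    left. replace (0 + 1 * Rpower t al) with (exp (al * ln t)) by (unfold Rpower; ring). apply exp_pos.
Qed.

Lemma A3_nonneg al la : 0 <= al -> 0 <= la <= 1 -> 0 <= A_3 al 1 la.
Proof.
  intros Hal Hla.
  pose proof (K (fun _ => 0) (fun _ => 0) 1 (-1) al la Hal Hla) as HK.
  rewrite Rminus_0_r, Rabs_R0 in HK.
  unfold A_3. assert (0 <= 1 * A_1 1 la + -1 * A_2 al 1 la); [|lra].
  apply HK.
  - intros; apply continuity_pt_const; intros ??; auto.
  - intros; auto_derive; auto.
  - intros t Ht. try rewrite Rabs_R0. apply Rmult_le_pos; [apply Rabs_pos|].
    assert (Rpower t al <= Rpower 1 al) by (apply Rle_Rpower_l; lra).
    rewrite Rpower_1_base in H. lra.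
Qed.

Lemma Piece (h dh g : R -> R) (m al la q c G Gy : R) :
  0 < m <= 1 -> 0 <= al <= 1 -> 0 <= la <= 1 -> 1 <= q -> 0 <= c -> 0 <= G -> 0 <= Gy ->
  (forall t, 0 <= t <= 1 -> continuity_pt h t) ->
  (forall t, 0 < t < 1 -> is_derive h t (dh t)) ->
  (forall t, 0 < t < 1 -> Rabs (dh t) <= m * c^2 * Rabs (t - la) * g t) ->
  (forall t, 0 < t < 1 -> 0 <= g t /\ rpow (g t) q <= rpow t al * G + m * (1 - rpow t al) * Gy) ->
  Rabs (h 1 - h 0) <= m * c^2 * (rpow (A_1 1 la) (1 - 1/q) * rpow (G * A_2 al 1 la + m * Gy * A_3 al 1 la) (1/q)).
Proof.
  intros Hm Hal Hla Hq Hc HG HGy Hcont Hder Hdb Hg.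
  pose proof (A1_pos la Hla). pose proof (A2_nonneg al la ltac:(lra) Hla).
  pose proof (A3_nonneg al la ltac:(lra) Hla).
  assert (Hmc : 0 <= m * c^2) by (apply Rmult_le_pos; [lra| apply pow2_ge_0]).
  apply opt; auto.
  { apply Rplus_le_le_0_compat; apply Rmult_le_pos; try apply Rmult_le_pos; lra. }
  intros s Hs. set (p := 1/q).
  assert (Hp : 0 < p <= 1).
  { unfold p. split. unfold Rdiv; rewrite Rmult_1_l; apply Rinv_0_lt_compat; lra.
    apply (Rmult_le_reg_r q); [lra|]. unfold Rdiv; rewrite Rmult_assoc, Rinv_l, Rmult_1_l by lra. lra. }
  set (P' := m * c^2 * (Rpower s p * (1 - p) + p * Rpower s (p - 1) * (m * Gy))).
  set (R' := m * c^2 * (p * Rpower s (p - 1) * (G - m * Gy))).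
  replace (m * c ^ 2 * (Rpower s p * (1 - p) * A_1 1 la + p * Rpower s (p - 1) * (G * A_2 al 1 la + m * Gy * A_3 al 1 la)))
    with (P' * A_1 1 la + R' * A_2 al 1 la) by (unfold P', R', A_3; ring).
  apply (K h dh); auto; try lra.
  intros t Ht. specialize (Hdb t Ht). destruct (Hg t Ht) as [Hg0 Hgq].
  rewrite (rpow_pos' t) in Hgq by lra.
  set (u := Rpower t al * G + m * (1 - Rpower t al) * Gy) in *.
  assert (Hgu : g t <= Rpower s p * (1 - p) + p * Rpower s (p - 1) * u).
  { rewrite <- (rpow_rpow (g t) q) by lra.
    eapply Rle_trans. apply rpow_mono; [split; [apply rpow_nonneg| exact Hgq] | exact (proj1 Hp)].
    apply tangent; auto. pose proof (rpow_nonneg (g t) q); lra. }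
  eapply Rle_trans; [exact Hdb|].
  replace (Rabs (t - la) * (P' + R' * Rpower t al)) with
     (m * c ^ 2 * Rabs (t - la) * (Rpower s p * (1 - p) + p * Rpower s (p - 1) * u)) by (unfold P', R', u; ring).
  apply Rmult_le_compat_l; auto. apply Rmult_le_pos; auto; apply Rabs_pos.
Qed.


Lemma ball_R (x e y : R) : ball x e y -> x - e < y < x + e.
Proof.
  intros H. unfold ball in H; simpl in H; unfold AbsRing_ball, abs, minus, plus, opp in H; simpl in H.
  apply Rabs_def2 in H. lra.
Qed.

Lemma open_sub (I : R -> Prop) (lo hi : R) :
  (forall y, lo < y < hi -> I y) -> forall t, lo < t < hi -> interior I t.
Proof.
  intros H t Ht. assert (Hr : 0 < Rmin (t - lo) (hi - t)) by (apply Rmin_glb_lt; lra).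
  exists (mkposreal _ Hr). intros y Hy. unfold disc in Hy; simpl in Hy.
  apply Rabs_def2 in Hy. pose proof (Rmin_l (t-lo) (hi-t)). pose proof (Rmin_r (t-lo) (hi-t)).
  apply H; lra.
Qed.

Lemma cont_of_der h t l : is_derive h t l -> continuity_pt h t.
Proof. intros H. apply derivable_continuous_pt. exists l. apply is_derive_Reals. exact H. Qed.

Theorem mainTheorem3
  (I : R -> Prop) (f df : R -> R) (m alpha a b q x lambda : R)
  (HI : is_interval I) (HIpos : forall t, I t -> 0 <= t)
  (Hdf : forall t, interior I t -> derivable_pt_lim f t (df t))
  (Hm : 0 < m <= 1) (Halpha : 0 <= alpha <= 1) (Hab : a < b)
  (Hma : interior I (m * a)) (Hb : interior I b)
  (Hconv : alpha_m_convex alpha m (fun t => m * a <= t <= b)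
             (fun t => rpow (Rabs (df t)) q))
  (Hq : 1 <= q) (Hx : a <= x <= b) (Hlambda : 0 <= lambda <= 1)
  (pr : Riemann_integrable f (m * a) (m * b)) :
  (Rabs ((1 - lambda) * f (m * x)
        + lambda * (((x - a) * f (m * a) + (b - x) * f (m * b)) / (b - a))
        - 1 / (m * (b - a)) * RiemannInt pr)
  <= m * rpow (A_1 1 lambda) (1 - 1 / q) / (b - a) *
     ((x - a) ^ 2 * rpow (rpow (Rabs (df (m * x))) q * A_2 alpha 1 lambda
                          + m * rpow (Rabs (df a)) q * A_3 alpha 1 lambda) (1 / q)
      + (b - x) ^ 2 * rpow (rpow (Rabs (df (m * x))) q * A_2 alpha 1 lambda
                          + m * rpow (Rabs (df b)) q * A_3 alpha 1 lambda) (1 / q)))%R.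
Proof.
  destruct Hma as [d1 Hd1]. destruct Hb as [d2 Hd2].
  assert (Ima : I (m*a)) by (apply Hd1; unfold disc; rewrite Rminus_diag, Rabs_R0; apply cond_pos).
  assert (Ha0 : 0 <= a).
  { pose proof (HIpos _ Ima). destruct (Rle_dec 0 a); auto. nra. }
  assert (Hmab : m * a <= a) by nra.
  set (lo := m * a - d1). set (hi := b + d2).
  assert (HU : forall y, lo < y < hi -> I y).
  { intros y Hy.
    apply (HI (Rmin y (m*a)) y (Rmax y b)).
    - apply Hd1. unfold disc. unfold Rmin. destruct (Rle_dec y (m*a)).
      + apply Rabs_def1; unfold lo in Hy; lra.
      + rewrite Rminus_diag, Rabs_R0; apply cond_pos.
    - apply Hd2. unfold disc. unfold Rmax. destruct (Rle_dec y b).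
      + rewrite Rminus_diag, Rabs_R0; apply cond_pos.
      + apply Rabs_def1; unfold hi in Hy; lra.
    - split; [apply Rmin_l | apply Rmax_l]. }
  assert (Hlo : lo < m * a) by (unfold lo; pose proof (cond_pos d1); lra).
  assert (Hhi : b < hi) by (unfold hi; pose proof (cond_pos d2); lra).
  assert (Hfd : forall y, lo < y < hi -> is_derive f y (df y)).
  { intros y Hy. apply is_derive_Reals. apply Hdf. apply (open_sub I lo hi HU); auto. }
  assert (Hfc : forall y, lo < y < hi -> continuous f y).
  { intros y Hy. apply continuity_pt_filterlim. eapply cont_of_der. apply Hfd; auto. }
  set (J := fun u => RInt f (m*a) u).
  assert (HJ : forall u, lo < u < hi -> is_derive J u (f u)).
  { intros u Hu. apply (is_derive_RInt f J (m*a) u); [|apply Hfc; auto].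
    assert (Hr : 0 < Rmin (u - lo) (hi - u)) by (apply Rmin_glb_lt; lra).
    exists (mkposreal _ Hr). intros y Hy. simpl in Hy. apply ball_R in Hy.
    pose proof (Rmin_l (u-lo) (hi-u)). pose proof (Rmin_r (u-lo) (hi-u)).
    apply (RInt_correct f (m*a) y). apply (ex_RInt_continuous f). intros z Hz. apply Hfc.
    pose proof (Rmin_l (m*a) y). pose proof (Rmax_r (m*a) y).
    pose proof (Rmin_r (m*a) y). pose proof (Rmax_l (m*a) y).
    unfold Rmin, Rmax in *. destruct (Rle_dec (m*a) y); lra. }
  assert (Hmx : m * a <= m * x <= b) by nra.
  set (G := rpow (Rabs (df (m * x))) q).
  assert (HGp : 0 <= G) by apply rpow_nonneg.
  set (h1 := fun t => (x-a)*(t-lambda)*f(t*(m*x)+m*(1-t)*a) - 1/m*J(t*(m*x)+m*(1-t)*a)).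
  assert (D1 : forall t, 0 <= t <= 1 -> is_derive h1 t (m*(x-a)^2*(t-lambda)*df(t*(m*x)+m*(1-t)*a))).
  { intros t Ht.
    assert (Hp : lo < t*(m*x)+m*(1-t)*a < hi) by nra.
    pose proof (Hfd _ Hp) as Hf1. pose proof (HJ _ Hp) as HJ1.
    unfold h1. auto_derive.
    - split; [exists (df (t*(m*x)+m*(1-t)*a)); auto | split; [exists (f (t*(m*x)+m*(1-t)*a)); auto | auto]].
    - replace (1 + - t) with (1 - t) by ring.
      replace (Derive (fun x0 => f x0) (t*(m*x)+m*(1-t)*a)) with (df (t*(m*x)+m*(1-t)*a)) by (symmetry; apply is_derive_unique; auto).
      replace (Derive (fun x0 => J x0) (t*(m*x)+m*(1-t)*a)) with (f (t*(m*x)+m*(1-t)*a)) by (symmetry; apply is_derive_unique; auto).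
      field. lra. }
  assert (P1 : Rabs (h1 1 - h1 0) <= m * (x-a)^2 * (rpow (A_1 1 lambda) (1 - 1/q) *
      rpow (G * A_2 alpha 1 lambda + m * rpow (Rabs (df a)) q * A_3 alpha 1 lambda) (1/q))).
  { apply (Piece h1 (fun t => m*(x-a)^2*(t-lambda)*df(t*(m*x)+m*(1-t)*a)) (fun t => Rabs (df (t*(m*x)+m*(1-t)*a))));
      auto; try lra; try apply rpow_nonneg.
    - intros t Ht. eapply cont_of_der. apply D1; auto.
    - intros t Ht. apply D1; lra.
    - intros t Ht. rewrite !Rabs_mult. rewrite (Rabs_pos_eq m) by lra.
      rewrite (Rabs_pos_eq ((x-a)^2)) by apply pow2_ge_0. lra.
    - intros t Ht. split; [apply Rabs_pos|].
      apply (Hconv (m*x) a t); simpl; try lra; nra. }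
  set (h2 := fun t => (b-x)*(t-lambda)*f(t*(m*x)+m*(1-t)*b) + 1/m*J(t*(m*x)+m*(1-t)*b)).
  assert (D2 : forall t, 0 <= t <= 1 -> is_derive h2 t (-(m*(b-x)^2*(t-lambda)*df(t*(m*x)+m*(1-t)*b)))).
  { intros t Ht.
    assert (0 <= m*(1-t)*(b-x)) by (apply Rmult_le_pos; [apply Rmult_le_pos|]; lra).
    assert (0 <= m*t*(b-x)) by (apply Rmult_le_pos; [apply Rmult_le_pos|]; lra).
    assert (m*b <= b) by nra.
    assert (Hp : lo < t*(m*x)+m*(1-t)*b < hi) by nra.
    pose proof (Hfd _ Hp) as Hf1. pose proof (HJ _ Hp) as HJ1.
    unfold h2. auto_derive.
    - split; [exists (df (t*(m*x)+m*(1-t)*b)); auto | split; [exists (f (t*(m*x)+m*(1-t)*b)); auto | auto]].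
    - replace (1 + - t) with (1 - t) by ring.
      replace (Derive (fun x0 => f x0) (t*(m*x)+m*(1-t)*b)) with (df (t*(m*x)+m*(1-t)*b)) by (symmetry; apply is_derive_unique; auto).
      replace (Derive (fun x0 => J x0) (t*(m*x)+m*(1-t)*b)) with (f (t*(m*x)+m*(1-t)*b)) by (symmetry; apply is_derive_unique; auto).
      field. lra. }
  assert (P2 : Rabs (h2 1 - h2 0) <= m * (b-x)^2 * (rpow (A_1 1 lambda) (1 - 1/q) *
      rpow (G * A_2 alpha 1 lambda + m * rpow (Rabs (df b)) q * A_3 alpha 1 lambda) (1/q))).
  { apply (Piece h2 (fun t => -(m*(b-x)^2*(t-lambda)*df(t*(m*x)+m*(1-t)*b))) (fun t => Rabs (df (t*(m*x)+m*(1-t)*b))));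
      auto; try lra; try apply rpow_nonneg.
    - intros t Ht. eapply cont_of_der. apply D2; auto.
    - intros t Ht. apply D2; lra.
    - intros t Ht. rewrite Rabs_Ropp, !Rabs_mult. rewrite (Rabs_pos_eq m) by lra.
      rewrite (Rabs_pos_eq ((b-x)^2)) by apply pow2_ge_0. lra.
    - intros t Ht. split; [apply Rabs_pos|].
      assert (0 <= m*(1-t)*(b-x)) by (apply Rmult_le_pos; [apply Rmult_le_pos|]; lra).
      assert (0 <= m*t*(b-x)) by (apply Rmult_le_pos; [apply Rmult_le_pos|]; lra).
      assert (m*b <= b) by nra.
      apply (Hconv (m*x) b t); simpl; try lra; nra. }
  assert (J0 : J (m*a) = 0) by (unfold J; apply (RInt_point (m*a) f)).
  assert (JR : RiemannInt pr = J (m*b)) by (unfold J; symmetry; apply RInt_Reals).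
  unfold h1, h2 in P1, P2.
  replace (1 * (m * x) + m * (1 - 1) * a) with (m*x) in P1 by ring.
  replace (0 * (m * x) + m * (1 - 0) * a) with (m*a) in P1 by ring.
  replace (1 * (m * x) + m * (1 - 1) * b) with (m*x) in P2 by ring.
  replace (0 * (m * x) + m * (1 - 0) * b) with (m*b) in P2 by ring.
  rewrite J0 in P1. rewrite JR.
  set (X1 := (x - a) * (1 - lambda) * f (m * x) - 1 / m * J (m * x) - ((x - a) * (0 - lambda) * f (m * a) - 1 / m * 0)) in P1.
  set (X2 := (b - x) * (1 - lambda) * f (m * x) + 1 / m * J (m * x) - ((b - x) * (0 - lambda) * f (m * b) + 1 / m * J (m * b))) in P2.
  replace ((1 - lambda) * f (m * x) + lambda * (((x - a) * f (m * a) + (b - x) * f (m * b)) / (b - a)) - 1 / (m * (b - a)) * J (m * b))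
    with ((X1 + X2) / (b - a)) by (unfold X1, X2; field; lra).
  unfold Rdiv at 1. rewrite Rabs_mult, (Rabs_pos_eq (/ (b-a))) by (left; apply Rinv_0_lt_compat; lra).
  assert (Hs : Rabs (X1 + X2) <= m * (x-a)^2 * (rpow (A_1 1 lambda) (1 - 1/q) *
      rpow (G * A_2 alpha 1 lambda + m * rpow (Rabs (df a)) q * A_3 alpha 1 lambda) (1/q))
      + m * (b-x)^2 * (rpow (A_1 1 lambda) (1 - 1/q) *
      rpow (G * A_2 alpha 1 lambda + m * rpow (Rabs (df b)) q * A_3 alpha 1 lambda) (1/q))).
  { eapply Rle_trans; [apply Rabs_triang|]. lra. }
  apply Rle_trans with ((m * (x-a)^2 * (rpow (A_1 1 lambda) (1 - 1/q) *
      rpow (G * A_2 alpha 1 lambda + m * rpow (Rabs (df a)) q * A_3 alpha 1 lambda) (1/q))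
      + m * (b-x)^2 * (rpow (A_1 1 lambda) (1 - 1/q) *
      rpow (G * A_2 alpha 1 lambda + m * rpow (Rabs (df b)) q * A_3 alpha 1 lambda) (1/q))) * / (b-a)).
  { apply Rmult_le_compat_r; [left; apply Rinv_0_lt_compat; lra | exact Hs]. }
  right. unfold G. field. lra.
Qed.
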